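(* Let $Q_{n,m}$ be as defined in the context. Every coloring of $Q_{n,m}$ has cardinality at least $\operatorname{slog}(n,m+1)$.
   Context: A quantum graph $G$ consists of a finite-dimensional complex inner product space $V(G)$ and a real vector space $E(G)$ of self-adjoint operators on $V(G)$ containing the identity $I$; write $|G|=\dim V(G)$ and $\|G\|=\dim E(G)-1$. A code of $G$ is a subspace $C\subseteq V(G)$ such that there is a function $\epsilon_C:E(G)\to\mathbb{R}$ with $P_CAP_C=\epsilon_C(A)P_C$ for all $A\in E(G)$, where $P_C$ is the orthogonal projection onto $C$. A coloring of $G$ is a set $K$ of codes of $G$ with $\sum_{C\in K}P_C=I$. The step logarithm is defined for positive integers $q$ and nonnegative integers $p$ by $\operatorname{slog}(0,q)=0$ and $\operatorname{slog}(p,q)=\operatorname{slog}(p-\lceil p/q\rceil,q)+1$ for $p\ge1$. Let $n\ge 2$ and $1\le m\le n-1$ be integers. $Q_{n,m}$ denotes any quantum graph with $|Q_{n,m}|=n$, $\|Q_{n,m}\|=m$, such that: (i) $E(Q_{n,m})$ is commutative; (ii) (tropical) $E(Q_{n,m})$ has a basis $\{I,A_1,\dots,A_m\}$ and there is an orthonormal basis of $V(Q_{n,m})$ of common eigenvectors of the $A_i$ such that, writing the eigenvalues of $A_i$ in decreasing order $\lambda_{i,1},\dots,\lambda_{i,n}$ with corresponding common eigenvectors $w_{i,1},\dots,w_{i,n}$, one has $0<\lambda_{i,j+1}<\lambda_{i,j}/n^2$ for all $i$ and $1\le j<n$; (iii) (cyclical) for $1\le i<m$ and all $j$, $w_{i+1,j}=w_{i,j+s_i}$,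 with the second index taken modulo $n$ in $\{1,\dots,n\}$, where $s_i=\lfloor n/m\rfloor+1$ if $1\le i\le (n\bmod m)$ and $s_i=\lfloor n/m\rfloor$ otherwise; (iv) the common eigenvectors are enumerated as $w_1,\dots,w_n$ (each common eigenvector exactly once) so that for every $l\in\{1,\dots,n\}$ one has $w_l=w_{i,\lceil l/m\rceil}$ for some $i\in\{1,\dots,m\}$. *)

(* Defs.v *)
From HB Require Import structures.
From mathcomp Require Import all_boot all_order all_algebra all_fingroup.
Set Implicit Arguments. Unset Strict Implicit. Unset Printing Implicit Defensive.
Import Order.TTheory GRing.Theory Num.Theory.

(* Step logarithm: slog 0 q = 0, slog p q = slog (p - ceil(p/q)) q + 1.
   Computed with fuel p (each step decreases p by ceil(p/q) >= 1 when q >= 1). *)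
Fixpoint slog_aux (fuel p q : nat) : nat :=
  match fuel with
  | 0 => 0
  | f.+1 => if p is 0 then 0 else (slog_aux f (p - (p + q - 1) %/ q) q).+1
  end.
Definition slog (p q : nat) : nat := slog_aux p p q.

Local Open Scope ring_scope.

Section QG.
Variables (C : numClosedFieldType) (n : nat).

Definition adj (M : 'M[C]_n) : 'M[C]_n := map_mx Num.conj (M^T).
Definition adjv (v : 'cV[C]_n) : 'rV[C]_n := map_mx Num.conj (v^T).
Definition self_adjoint (M : 'M[C]_n) : Prop := adj M = M.

Definition orth_proj (P : 'M[C]_n) : Prop := P *m P = P /\ adj P = P.

(* A code of a quantum graph with edge space E (given as a predicate),
   represented by its orthogonal projection P_C *)
Definition is_code (E : 'M[C]_n -> Prop) (P : 'M[C]_n) : Prop :=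
  orth_proj P /\
  forall B, E B -> exists e : C, e \is Num.real /\ P *m B *m P = e *: P.

Definition coloring (E : 'M[C]_n -> Prop) (K : seq 'M[C]_n) : Prop :=
  uniq K /\ (forall P, P \in K -> is_code E P) /\ \sum_(P <- K) P = 1%:M.

Definition real_span (m : nat) (A : 'I_m -> 'M[C]_n) (B : 'M[C]_n) : Prop :=
  exists c : 'I_m.+1 -> C, (forall i, c i \is Num.real) /\
    B = c ord0 *: 1%:M + \sum_(i < m) c (lift ord0 i) *: A i.

Definition real_indep (m : nat) (A : 'I_m -> 'M[C]_n) : Prop :=
  forall c : 'I_m.+1 -> C, (forall i, c i \is Num.real) ->
    c ord0 *: 1%:M + \sum_(i < m) c (lift ord0 i) *: A i = 0 ->
    forall i, c i = 0.

Definition orthonormal_basis (u : 'I_n -> 'cV[C]_n) : Prop :=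
  forall a b, adjv (u a) *m u b = ((a == b)%:R)%:M.

End QG.

(* cyclic shift s_i, for 0-indexed i (i.e. paper index i+1) *)
Definition shift_s (n m i : nat) : nat := n %/ m + (i < n %% m).

(* Main.v *)
Require Import Defs.
From HB Require Import structures.
From mathcomp Require Import all_boot all_order all_algebra all_fingroup.
From mathcomp Require Import zify ring.
Import Order.TTheory GRing.Theory Num.Theory.

Definition fstep (p q : nat) := (p - (p + q - 1) %/ q)%N.

Lemma fstep_lt p q : (0 < q)%N -> (0 < p)%N -> (fstep p q < p)%N.
Proof.
move=> q0 p0; rewrite /fstep.
have : (0 < (p + q - 1) %/ q)%N by rewrite divn_gt0 //; lia.
lia.
Qed.

Lemma fstep_mono p p' q : (0 < q)%N -> (p <= p')%N -> (fstep p q <= fstep p' q)%N.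
Proof.
move=> q0 le; rewrite /fstep.
have h1 : ((p + q - 1) %/ q < p.+1)%N.
  rewrite ltn_divLR //. case: q q0 => // q _. nia.
have h2 : ((p' + q - 1) %/ q < ((p + q - 1) %/ q + (p' - p)).+1)%N.
  rewrite ltn_divLR //.
  have := divn_eq (p + q - 1) q. have := ltn_pmod (p + q - 1) q0. nia.
lia.
Qed.

Lemma slog_aux_fuel f f' p q : (0 < q)%N -> (p <= f)%N -> (p <= f')%N ->
  slog_aux f p q = slog_aux f' p q.
Proof.
move=> q0; elim: f f' p => [|f IH] [|f'] p /=; try by case: p.
case: p => [//|p] hf hf'. congr S. apply: IH.
- have := @fstep_lt p.+1 q q0 (ltn0Sn p); rewrite /fstep; lia.
- have := @fstep_lt p.+1 q q0 (ltn0Sn p); rewrite /fstep; lia.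
Qed.

Lemma slogS p q : (0 < q)%N -> (0 < p)%N -> slog p q = (slog (fstep p q) q).+1.
Proof.
move=> q0 p0; rewrite /slog; case: p p0 => // p _ /=; congr S.
apply: slog_aux_fuel => //; have := @fstep_lt p.+1 q q0 (ltn0Sn p); rewrite /fstep; lia.
Qed.

Lemma slog_mono p p' q : (0 < q)%N -> (p <= p')%N -> (slog p q <= slog p' q)%N.
Proof.
move=> q0 le.
suff H : forall f p p', (p <= p')%N -> (p' <= f)%N -> (slog_aux f p q <= slog_aux f p' q)%N.
  rewrite /slog (@slog_aux_fuel p p' p q) //; exact: H.
clear le; elim=> [|f IH] a b hle hf /=; first by [].
case: a hle => [//|a] hle; case: b hle hf => [//|b] hle hf.
rewrite ltnS; apply: IH; first exact: fstep_mono.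
have := @fstep_lt b.+1 q q0 (ltn0Sn b); rewrite /fstep; lia.
Qed.

Lemma slog_step S d m : (0 < m)%N -> (d = 0 \/ m * d.-1 <= S)%N ->
  (slog (S + d) m.+1 <= (slog S m.+1).+1)%N.
Proof.
move=> m0 h.
case: (posnP (S + d)) => [->|pos]; first by rewrite /slog.
rewrite slogS //; rewrite ltnS; apply: slog_mono => //.
rewrite /fstep.
have : (d <= (S + d + m.+1 - 1) %/ m.+1)%N.
  rewrite leq_divRL //. case: h => [->|h]; first by lia. nia.
lia.
Qed.

Lemma sum_ind_lt r i : (\sum_(0 <= k < i) (k < r : nat))%N = minn i r.
Proof.
elim: i => [|i IH]; first by rewrite big_nil; lia.
rewrite big_nat_recr //= IH; case: (ltnP i r) => h; lia.
Qed.

Lemma find_block (o : nat -> nat) m x : o 0 = 0%N -> (x < o m)%N ->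
  exists k, [/\ (k < m)%N, (o k <= x)%N & (x < o k.+1)%N].
Proof.
move=> o0; elim: m => [|m IH]; first by rewrite o0.
move=> hx; case: (ltnP x (o m)) => h.
  by case: (IH h) => k [k1 k2 k3]; exists k; split => //; lia.
by exists m; split.
Qed.

Section Cyc.
Variables (n m : nat) (hm1 : (0 < m)%N) (hmn : (m <= n.-1)%N).
Variable sigma : 'I_m -> {perm 'I_n}.
Hypothesis hcycs : forall (i k : 'I_m) (j j' : 'I_n), val k = (val i).+1 ->
            val j' = ((val j + shift_s n m i) %% n)%N -> sigma k j = sigma i j'.

Definition oo (i : nat) := (\sum_(0 <= k < i) shift_s n m k)%N.

Lemma oo_succ i : oo i.+1 = (oo i + shift_s n m i)%N.
Proof. by rewrite /oo big_nat_recr. Qed.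

Lemma oo0 : oo 0 = 0%N.
Proof. by rewrite /oo big_nil. Qed.

Lemma oo_mono i j : (i <= j)%N -> (oo i <= oo j)%N.
Proof.
elim: j => [|j IH]; first by rewrite leqn0 => /eqP ->.
rewrite leq_eqVlt => /orP [/eqP -> //|]; rewrite ltnS => /IH.
rewrite oo_succ; lia.
Qed.

Lemma n_pos : (0 < n)%N.
Proof. lia. Qed.

Lemma oo_m : oo m = n.
Proof.
rewrite /oo /shift_s big_split /= sum_nat_const_nat sum_ind_lt.
have := ltn_pmod n hm1; have := divn_eq n m. lia.
Qed.

Definition i0 : 'I_m := Ordinal hm1.
Definition modord (x : nat) : 'I_n := Ordinal (ltn_pmod x n_pos).

Lemma sig_o k (hk : (k < m)%N) (p : 'I_n) :
  sigma (Ordinal hk) p = sigma i0 (modord (p + oo k)).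
Proof.
have n0 := n_pos.
elim: k hk p => [|k IH] hk p.
  congr (sigma _ _); first exact: val_inj.
  by apply: val_inj; rewrite /= oo0 addn0 modn_small.
have hk' : (k < m)%N by lia.
rewrite (@hcycs (Ordinal hk') (Ordinal hk) p (modord (p + shift_s n m k))) //.
rewrite IH; congr (sigma _ _); apply: val_inj => /=.
rewrite modnDml oo_succ addnA; congr (_ %% n); lia.
Qed.

Lemma cyc_count (H : {set 'I_n}) L :
  (forall (i : 'I_m) (p : 'I_n), (p < L)%N -> sigma i p \in H) ->
  (minn n (m * L) <= #|H|)%N.
Proof.
move=> hH; have n0 := n_pos.
case: (leqP L (n %/ m)) => hL.
- have hLn : (L <= n)%N by have := leq_div n m; move: hL; generalize (n %/ m); lia.
  have hs : forall j, (j < m)%N -> (L <= shift_s n m j)%N.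
    by move=> j _; rewrite /shift_s; apply: (leq_trans hL); rewrite leq_addr.
  clear hL.
  pose f (x : 'I_m * 'I_L) := sigma x.1 (widen_ord hLn x.2).
  have finj : injective f.
    move=> [i p] [i' p']; rewrite /f /=.
    case: i => i hi; case: i' => i' hi'.
    rewrite (@sig_o i hi) (@sig_o i' hi') => /perm_inj /(congr1 val) /=.
    have bnd : forall j (q : 'I_L), (j < m)%N -> (q + oo j < oo j.+1)%N.
      by move=> j q hj; rewrite oo_succ; have := hs j hj; have := ltn_ord q; lia.
    have bnd2 : forall j (q : 'I_L), (j < m)%N -> (q + oo j < n)%N.
      move=> j q hj; have := bnd j q hj; have := @oo_mono j.+1 m hj; rewrite oo_m; lia.
    rewrite !modn_small ?bnd2 // => e.
    have ii : i = i'.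
      case: (ltngtP i i') => // h.
      + have := bnd i p hi; have := @oo_mono i.+1 i' h; lia.
      + have := bnd i' p' hi'; have := @oo_mono i'.+1 i h; lia.
    subst i'; have pp : p = p' by apply: val_inj => /=; lia.
    by subst p'; congr (_, _); apply: val_inj.
  have : #|f @: [set: 'I_m * 'I_L]| = (m * L)%N
    by rewrite card_imset // cardsT card_prod !card_ord.
  move=> <-; rewrite geq_min; apply/orP; right; apply: subset_leq_card.
  apply/subsetP => b /imsetP [[i p] _ ->]; apply: hH => /=; exact: ltn_ord.
- have hsall : forall k, (shift_s n m k <= L)%N.
    by move=> k; rewrite /shift_s; case: (_ < _)%N; rewrite ?addn0 ?addn1 // ltnW.
  clear hL.
  suff -> : H = setT by rewrite cardsT card_ord geq_minl.
  apply/setP => b; rewrite inE; apply/idP.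
  set x := ((sigma i0)^-1)%g b.
  have hx : (x < oo m)%N by rewrite oo_m ltn_ord.
  case: (@find_block oo m x oo0 hx) => k [hk h1 h2].
  have hp : (x - oo k < n)%N by have := ltn_ord x; lia.
  have := hH (Ordinal hk) (Ordinal hp).
  rewrite (@sig_o k hk).
  have -> : modord (Ordinal hp + oo k) = x.
    by apply: val_inj => /=; rewrite subnK // modn_small ?ltn_ord.
  rewrite /x permKV; apply => /=.
  rewrite -/x; have := hsall k; move: h2 h1; rewrite oo_succ /=; lia.
Qed.
End Cyc.

Local Open Scope ring_scope.

Lemma tr_rank (F : fieldType) n (P : 'M[F]_n) : P *m P = P -> \tr P = (\rank P)%:R.
Proof.
move=> PP.
have RL : row_base P *m col_base P = 1%:M.
  apply: (row_full_inj (col_base_full P)); apply: (row_free_inj (row_base_free P)).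
  rewrite mulmx1 mulmx_base (mulmxA (col_base P) (row_base P) (col_base P)) mulmx_base -(mulmxA P (col_base P) (row_base P)) mulmx_base.
  exact: PP.
by rewrite -{1}(mulmx_base P) mxtrace_mulC RL mxtrace1.
Qed.

Section Lin.
Variables (C : numClosedFieldType) (n : nat).

Definition ct p q (M : 'M[C]_(p, q)) : 'M[C]_(q, p) := map_mx Num.conj (M^T).
Arguments ct {p q}.

Lemma ctM p q r (X : 'M[C]_(p, q)) (Y : 'M[C]_(q, r)) : ct (X *m Y) = ct Y *m ct X.
Proof. by rewrite /ct trmx_mul map_mxM. Qed.

Lemma ctK p q (X : 'M[C]_(p, q)) : ct (ct X) = X.
Proof. by apply/matrixP => a b; rewrite !mxE conjCK. Qed.

Definition dg (mu : 'I_n -> C) : 'M[C]_n := diag_mx (\row_b mu b).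

Lemma diag_entry (Q : 'M[C]_n) b : Q *m Q = Q -> adj Q = Q ->
  Q b b = \sum_k Q b k * (Q b k)^*.
Proof.
move=> QQ QH; rewrite -{1}QQ mxE; apply: eq_bigr => k _.
by have := congr1 (fun M : 'M[C]_n => M k b) QH; rewrite !mxE => <-.
Qed.

Lemma diag_ge0 (Q : 'M[C]_n) b : Q *m Q = Q -> adj Q = Q -> 0 <= Q b b.
Proof.
move=> QQ QH; rewrite diag_entry //; apply: sumr_ge0 => k _; exact: mul_conjC_ge0.
Qed.

Lemma tr_dg (Q : 'M[C]_n) mu : \tr (Q *m dg mu) = \sum_b Q b b * mu b.
Proof. by rewrite /mxtrace; apply: eq_bigr => b _; rewrite mul_mx_diag !mxE. Qed.

Lemma rank_le_count (Q : 'M[C]_n) (mu : 'I_n -> C) (e : C) :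
  Q *m Q = Q -> adj Q = Q -> e \is Num.real -> (forall b, mu b \is Num.real) ->
  Q *m dg mu *m Q = e *: Q -> (\rank Q <= #|[set b | (e <= mu b)%R]|)%N.
Proof.
move=> QQ QH er mur QDQ.
set G := [set b | (e <= mu b)%R].
pose Bs : 'M[C]_(n, #|G|) := \matrix_(a, k) ((a == enum_val k)%:R).
rewrite -(mxrank_mul_ker Q Bs).
suff -> : \rank (Q :&: kermx Bs)%MS = 0%N by rewrite addn0 rank_leq_col.
apply/eqP; rewrite mxrank_eq0; apply/rowV0P => v.
rewrite sub_capmx => /andP [/submxP [w hw] /sub_kermxP hk].
have vQ : v *m Q = v by rewrite hw -mulmxA QQ.
have vG : forall b, b \in G -> v 0 b = 0.
  move=> b hb; have := congr1 (fun X : 'M[C]_(1, #|G|) => X 0 (enum_rank_in hb b)) hk.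
  rewrite !mxE /= (bigD1 b) //= /Bs !mxE enum_rankK_in // eqxx mulr1 big1 ?addr0 //.
  by move=> a /negbTE ab; rewrite !mxE enum_rankK_in // ab mulr0.
have vs : ct v = Q *m ct v by rewrite -{1}vQ ctM; congr (_ *m _).
have quad : v *m (dg mu - e%:M) *m ct v = 0.
  have inner : Q *m (dg mu - e%:M) *m Q = 0.
    by rewrite mulmxBr mulmxBl QDQ mul_mx_scalar -scalemxAl QQ subrr.
  have -> : v *m (dg mu - e%:M) *m ct v = v *m (Q *m (dg mu - e%:M) *m Q) *m ct v.
    by rewrite !mulmxA vQ -(mulmxA (v *m (dg mu - e%:M)) Q (ct v)) -vs.
  by rewrite inner mulmx0 mul0mx.
rewrite mulmxBr mul_mx_diag mul_mx_scalar in quad.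
have := congr1 (fun X : 'M[C]_1 => X 0 0) quad; rewrite mxE [X in _ = X -> _]mxE.
move=> s0.
have s1 : \sum_b (e - mu b) * (v 0 b * (v 0 b)^*) = 0.
  apply/eqP; rewrite -oppr_eq0 -sumrN; apply/eqP; rewrite -[RHS]s0; apply: eq_bigr => b _.
  by rewrite /ct !mxE; ring.
have ge0 : forall b, 0 <= (e - mu b) * (v 0 b * (v 0 b)^*).
  move=> b; case: (boolP (b \in G)) => hb.
    by rewrite vG // mul0r mulr0.
  apply: mulr_ge0; last exact: mul_conjC_ge0.
  move: hb; rewrite inE => hb; rewrite subr_ge0.
  by apply: ltW; rewrite real_ltNge ?mur.
have z := psumr_eq0P (fun b _ => ge0 b) s1.
apply/rowP => b; rewrite mxE.
case: (boolP (b \in G)) => hb; first exact: vG.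
have /eqP := z b isT; rewrite mulf_eq0 => /orP [|].
  move: hb; rewrite inE subr_eq0 => hb /eqP ebe; by rewrite ebe lexx in hb.
by rewrite mul_conjC_eq0 => /eqP.
Qed.
End Lin.
Arguments ct {C p q}.
Arguments ctM {C p q r}.
Arguments ctK {C p q}.
Arguments dg {C n}.
Arguments diag_entry {C n}.
Arguments diag_ge0 {C n}.
Arguments tr_dg {C n}.
Arguments rank_le_count {C n}.

Lemma exists_max (T : eqType) (C : numDomainType) (s : seq T) (f : T -> C) :
  (forall x, x \in s -> f x \is Num.real) -> (exists x, x \in s) ->
  exists2 x, x \in s & forall y, y \in s -> f y <= f x.
Proof.
elim: s => [|a s IH] hr [x hx]; first by [].
case: s IH hr hx => [|b s] IH hr hx.
  by exists a; rewrite ?mem_head // => y; rewrite inE => /eqP ->.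
have [|c hc hcm] := IH _ (ex_intro _ b (mem_head _ _)).
  by move=> y hy; apply: hr; rewrite inE hy orbT.
have ra : f a \is Num.real by apply: hr; rewrite mem_head.
have rc : f c \is Num.real by apply: hr; rewrite inE hc orbT.
case/orP: (real_leVge ra rc) => h.
  exists c; first by rewrite inE hc orbT.
  by move=> y; rewrite inE => /orP [/eqP ->|]; [exact: h | exact: hcm].
exists a; first exact: mem_head.
move=> y; rewrite inE => /orP [/eqP ->|hy]; first exact: lexx.
exact: le_trans (hcm _ hy) h.
Qed.

Section Key.
Variables (C : numClosedFieldType) (n m : nat).
Hypotheses (hm1 : (0 < m)%N) (hmn : (m <= n.-1)%N).
Variables (sigma : 'I_m -> {perm 'I_n}) (lam : 'I_m -> 'I_n -> C) (mu : 'I_m -> 'I_n -> C).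
Hypothesis hmu : forall i p, mu i (sigma i p) = lam i p.
Hypothesis hpos : forall i j, 0 < lam i j.
Hypothesis hdec : forall i (j k : 'I_n), val k = (val j).+1 ->
            lam i k < lam i j / (n ^ 2)%:R.
Hypothesis hcycs : forall (i k : 'I_m) (j j' : 'I_n), val k = (val i).+1 ->
            val j' = ((val j + shift_s n m i) %% n)%N -> sigma k j = sigma i j'.

Lemma npos : (0 < n)%N.
Proof. lia. Qed.

Lemma n2_gt0 : 0 < (n ^ 2)%:R :> C.
Proof. rewrite ltr0n; have := npos; lia. Qed.

Lemma mu_pos i b : 0 < mu i b.
Proof. by rewrite -(permKV (sigma i) b) hmu. Qed.

Lemma mu_real i b : mu i b \is Num.real.
Proof. exact/gtr0_real/mu_pos. Qed.

Lemma hdec' i (j k : 'I_n) : val k = (val j).+1 -> (n ^ 2)%:R * lam i k < lam i j.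
Proof.
move=> h; have := @hdec i j k h; rewrite ltr_pdivlMr ?n2_gt0 // mulrC //.
Qed.

Lemma lam_mono i (p q : 'I_n) : (p <= q)%N -> lam i q <= lam i p.
Proof.
move=> le; have : (q : nat) = (p + (q - p))%N by lia.
move: (q - p)%N => d; clear le; elim: d q => [|d IH] q hq.
  by have -> : q = p by apply: val_inj => /=; rewrite hq addn0.
have hq' : ((q : nat) - 1 < n)%N by have := ltn_ord q; lia.
have := IH (Ordinal hq') ltac:(simpl; lia).
have := @hdec' i (Ordinal hq') q ltac:(simpl; lia).
move=> h1 h2; apply: le_trans h2; apply: ltW; apply: le_lt_trans h1.
rewrite ler_peMl ?(ltW (hpos _ _)) // ler1n; have := npos; lia.
Qed.

Definition iscode (Q : 'M[C]_n) := Q *m Q = Q /\ adj Q = Q /\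
  forall i, exists e, e \is Num.real /\ Q *m dg (mu i) *m Q = e *: Q.

Definition epsf (Q : 'M[C]_n) i := \tr (Q *m dg (mu i)) / \tr Q.

Lemma eps_spec Q i : iscode Q -> (0 < \rank Q)%N ->
  [/\ Q *m dg (mu i) *m Q = epsf Q i *: Q, epsf Q i \is Num.real,
      0 < epsf Q i & \tr (Q *m dg (mu i)) = epsf Q i * \tr Q].
Proof.
move=> [QQ [QH hc]] rk; have [e [er he]] := hc i.
have trQ : \tr Q = (\rank Q)%:R by exact: tr_rank.
have trne : \tr Q != 0 by rewrite trQ pnatr_eq0 -lt0n.
have etr : \tr (Q *m dg (mu i)) = e * \tr Q.
  by rewrite -{1}QQ -mulmxA mxtrace_mulC he mxtraceZ.
have ee : epsf Q i = e by rewrite /epsf etr mulfK.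
rewrite ee; split => //.
have : 0 < e * \tr Q.
  rewrite -etr tr_dg lt_def; apply/andP; split; last first.
    by apply: sumr_ge0 => b _; apply: mulr_ge0; [exact: diag_ge0|exact: ltW (mu_pos _ _)].
  apply/negP => /eqP s0.
  have z : forall b, Q b b * mu i b = 0.
    move=> b; apply: (psumr_eq0P _ s0) => // b' _.
    by apply: mulr_ge0; [exact: diag_ge0|exact: ltW (mu_pos _ _)].
  have : \tr Q = 0.
    rewrite /mxtrace big1 // => b _; have /eqP := z b.
    by rewrite mulf_eq0 (gt_eqF (mu_pos _ _)) orbF => /eqP.
  by move/eqP; rewrite (negbTE trne).
by rewrite pmulr_lgt0 // trQ ltr0n.
Qed.

Lemma pos_in i (e : C) (d : nat) (p : 'I_n) : 0 < e ->
  (d <= #|[set b | (e <= mu i b)%R]|)%N -> (p < d.-1)%N -> (n ^ 2)%:R * e <= lam i p.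
Proof.
move=> e0 hd hp.
set S := [set q : 'I_n | (e <= lam i q)%R].
have cS : #|[set b | (e <= mu i b)%R]| = #|S|.
  suff -> : [set b | (e <= mu i b)%R] = sigma i @: S by rewrite card_imset //; exact: perm_inj.
  apply/setP => b; rewrite inE; apply/idP/imsetP.
    by move=> h; exists ((sigma i)^-1 b)%g; rewrite ?permKV // inE -hmu permKV.
  by move=> [q]; rewrite inE => h ->; rewrite hmu.
have [q hq pq] : exists2 q, q \in S & (p < q)%N.
  case: (boolP [exists q, (q \in S) && (p < q)%N]) => [/existsP [q /andP [hq pq]]|].
    by exists q.
  rewrite negb_exists => /forallP hall; exfalso.
  have hpn : (p.+1 <= n)%N by exact: ltn_ord.
  have : (#|S| <= p.+1)%N.
    have winj : injective (widen_ord hpn) by move=> a b h; apply: val_inj; exact: (congr1 val h).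
    rewrite -[p.+1](card_ord) -cardsT -(card_imset _ winj).
    apply: subset_leq_card; apply/subsetP => x hx.
    have := hall x; rewrite hx /= -leqNgt => hxp.
    apply/imsetP; exists (Ordinal (hxp : (x < p.+1)%N)); rewrite ?inE //.
    exact: val_inj.
  rewrite -cS; move: hp hd; lia.
have hp1 : (p.+1 < n)%N by apply: leq_trans (ltn_ord q).
have := @lam_mono i (Ordinal hp1) q pq.
move: hq; rewrite inE => eq hl.
have := @hdec' i p (Ordinal hp1) erefl.
move=> h; apply: ltW; apply: le_lt_trans h.
rewrite ler_pM2l ?n2_gt0 //; exact: le_trans eq hl.
Qed.


Lemma keyR (Z Y : seq 'M[C]_n) (d : nat) :
  (forall Q, Q \in Z ++ Y -> iscode Q) -> \sum_(Q <- Z ++ Y) Q = 1%:M ->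
  (0 < d)%N -> (exists Q, Q \in Y) -> (forall Q, Q \in Y -> (d <= \rank Q)%N) ->
  (minn n (m * d.-1) <= \sum_(Q <- Z) \rank Q)%N.
Proof.
move=> hc hsum d0 hY hrk.
have hcY : forall Q, Q \in Y -> iscode Q by move=> Q hQ; apply: hc; rewrite mem_cat hQ orbT.
have hcZ : forall Q, Q \in Z -> iscode Q by move=> Q hQ; apply: hc; rewrite mem_cat hQ.
have hrY : forall Q, Q \in Y -> (0 < \rank Q)%N by move=> Q hQ; apply: leq_trans (hrk _ hQ).
have hmax : forall i, exists z, z \in Y /\ forall Q, Q \in Y -> epsf Q i <= epsf z i.
  move=> i; have [|z hz hzm] := @exists_max _ _ Y (fun Q => epsf Q i) _ hY.
    by move=> Q hQ; have [_ ? _ _] := @eps_spec Q i (hcY _ hQ) (hrY _ hQ).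
  by exists z.
have [zf hzf] := fin_all_exists hmax.
pose th i := epsf (zf i) i.
have thspec : forall i, [/\ zf i *m dg (mu i) *m zf i = th i *: zf i, th i \is Num.real,
      0 < th i & \tr (zf i *m dg (mu i)) = th i * \tr (zf i)].
  by move=> i; have [hz _] := hzf i; exact: (@eps_spec (zf i) i (hcY _ hz) (hrY _ hz)).
have thpos : forall i, 0 < th i by move=> i; have [] := thspec i.
have thcount : forall i, (d <= #|[set b | (th i <= mu i b)%R]|)%N.
  move=> i; have [hz _] := hzf i; have [QQ [QH _]] := hcY _ hz.
  have [h1 h2 _ _] := thspec i.
  apply: leq_trans (hrk _ hz) _; apply: rank_le_count => //; exact: mu_real.
set H := [set b | [exists i, ((n ^ 2)%:R * th i <= mu i b)%R]].
have hH : (minn n (m * d.-1) <= #|H|)%N.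
  apply: (@cyc_count n m hm1 hmn sigma hcycs H d.-1) => i p hp.
  rewrite inE; apply/existsP; exists i; rewrite hmu; apply: pos_in => //; exact: thcount.
apply: leq_trans hH _.
have trrk : forall Q, iscode Q -> \tr Q = (\rank Q)%:R.
  by move=> Q [QQ _]; exact: tr_rank.
have sumrank : (\sum_(Q <- Z ++ Y) \rank Q)%N = n.
  apply/eqP; rewrite -(eqr_nat C) natr_sum.
  rewrite -(eq_big_seq _ (fun Q hQ => trrk Q (hc Q hQ))) -raddf_sum hsum; exact/eqP/mxtrace1.
pose y b := \sum_(Q <- Y) Q b b.
pose z b := \sum_(Q <- Z) Q b b.
have hyz : forall b, y b + z b = 1.
  move=> b; have := congr1 (fun M : 'M[C]_n => M b b) hsum.
  by rewrite /= summxE big_cat mxE eqxx /= addrC.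
have hy0 : forall b, 0 <= y b.
  by move=> b; rewrite /y big_seq; apply: sumr_ge0 => Q hQ; have [QQ [QH _]] := hcY _ hQ; exact: diag_ge0.
have hz0 : forall b, 0 <= z b.
  by move=> b; rewrite /z big_seq; apply: sumr_ge0 => Q hQ; have [QQ [QH _]] := hcZ _ hQ; exact: diag_ge0.
pose w b := \sum_i mu i b / th i.
have hw0 : forall b, 0 <= w b.
  move=> b; apply: sumr_ge0 => i _; apply: divr_ge0; exact: ltW (mu_pos _ _) || exact: ltW.
have hwH : forall b, b \in H -> (n ^ 2)%:R <= w b.
  move=> b; rewrite inE => /existsP [i hi].
  rewrite /w (bigD1 i) //= -[X in X <= _]addr0; apply: lerD.
    by rewrite ler_pdivlMr // mulrC.
  by apply: sumr_ge0 => j _; apply: divr_ge0; [exact: ltW (mu_pos _ _)|exact: ltW].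
have hQw : forall Q, Q \in Y -> \sum_b Q b b * w b <= m%:R * \tr Q.
  move=> Q hQ; have [QQ [QH _]] := hcY _ hQ.
  have trQ0 : 0 <= \tr Q by rewrite (trrk Q (hcY _ hQ)) ler0n.
  rewrite (eq_bigr (fun b => \sum_i Q b b * mu i b / th i)); last first.
    by move=> b _; rewrite /w mulr_sumr; apply: eq_bigr => i _; rewrite mulrA.
  rewrite exchange_big /= -[m in m%:R](card_ord m) -sumr_const mulr_suml.
  apply: ler_sum => i _; rewrite -mulr_suml -tr_dg.
  have [_ _ _ etr] := @eps_spec Q i (hcY _ hQ) (hrY _ hQ).
  rewrite etr ler_pdivrMr // mulrC mul1r; apply: ler_wpM2l => //.
  by have [_ ->] := hzf i.
have hsumY : \sum_b y b * w b <= m%:R * n%:R.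
  rewrite (eq_bigr (fun b => \sum_(Q <- Y) Q b b * w b)); last first.
    by move=> b _; rewrite /y mulr_suml.
  rewrite exchange_big /=.
  apply: le_trans (_ : \sum_(Q <- Y) m%:R * \tr Q <= _).
    by rewrite big_seq [X in _ <= X]big_seq; apply: ler_sum => Q hQ; exact: hQw.
  rewrite -mulr_sumr ler_wpM2l ?ler0n //.
  rewrite (eq_big_seq _ (fun Q hQ => trrk Q (hcY Q hQ))) -natr_sum ler_nat.
  by apply: leq_trans (leq_addl (\sum_(Q <- Z) \rank Q) _) _; rewrite -big_cat /= sumrank.
have hHy : \sum_(b in H) y b < 1.
  have sr : \sum_(b in H) y b \is Num.real by apply: ger0_real; apply: sumr_ge0.
  rewrite real_ltNge ?num_real //; apply/negP => h1.
  have : (n ^ 2)%:R <= m%:R * n%:R :> C.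
    apply: le_trans hsumY.
    apply: le_trans (_ : \sum_(b in H) y b * w b <= _); last first.
      rewrite [X in _ <= X](bigID (mem H)) /= lerDl; apply: sumr_ge0 => b _.
      by apply: mulr_ge0.
    apply: le_trans (_ : \sum_(b in H) y b * (n ^ 2)%:R <= _).
      by rewrite -mulr_suml -[X in X <= _]mul1r ler_wpM2r ?ler0n.
    by apply: ler_sum => b hb; apply: ler_wpM2l => //; exact: hwH.
  rewrite -natrM ler_nat; have := npos; nia.
have hZ : #|H|%:R - 1 < (\sum_(Q <- Z) \rank Q)%:R :> C.
  rewrite natr_sum (eq_big_seq _ (fun Q hQ => esym (trrk Q (hcZ Q hQ)))).
  have -> : \sum_(Q <- Z) \tr Q = \sum_b z b.
    by rewrite /z exchange_big.
  apply: lt_le_trans (_ : #|H|%:R - \sum_(b in H) y b <= _).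
    by rewrite ltrD2l ltrN2.
  apply: le_trans (_ : \sum_(b in H) z b <= _); last first.
    by rewrite [X in _ <= X](bigID (mem H)) /= lerDl; apply: sumr_ge0.
  rewrite -[#|H|%:R](sumr_const (mem H) (1 : C)) -sumrB; apply: ler_sum => b _.
  by rewrite -(hyz b) addrC addKr.
by move: hZ; rewrite ltrBlDr natr1 ltr_nat ltnS.
Qed.

Lemma sum_rank (L : seq 'M[C]_n) : (forall Q, Q \in L -> iscode Q) ->
  \sum_(Q <- L) Q = 1%:M -> (\sum_(Q <- L) \rank Q)%N = n.
Proof.
move=> hc hsum.
have trrk : forall Q, iscode Q -> \tr Q = (\rank Q)%:R.
  by move=> Q [QQ _]; exact: tr_rank.
apply/eqP; rewrite -(eqr_nat C) natr_sum.
rewrite -(eq_big_seq _ (fun Q hQ => trrk Q (hc Q hQ))) -raddf_sum hsum; exact/eqP/mxtrace1.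
Qed.

Lemma core (Qs : seq 'M[C]_n) : (forall Q, Q \in Qs -> iscode Q) ->
  \sum_(Q <- Qs) Q = 1%:M -> (slog n m.+1 <= size Qs)%N.
Proof.
move=> hc hsum.
pose le := fun P Q : 'M[C]_n => (\rank P <= \rank Q)%N.
pose s := sort le Qs.
have ps : perm_eq s Qs by rewrite perm_sort.
have hs : sorted le s by apply: sort_sorted => P Q; exact: leq_total.
have hcs : forall Q, Q \in s -> iscode Q by move=> Q; rewrite (perm_mem ps); exact: hc.
have hsums : \sum_(Q <- s) Q = 1%:M by rewrite (perm_big _ ps).
have tot := @sum_rank s hcs hsums.
suff H : forall j, (j <= size s)%N -> (slog (\sum_(Q <- take j s) \rank Q) m.+1 <= j)%N.
  by have := H _ (leqnn _); rewrite take_size tot (perm_size ps).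
elim=> [|j IH] hj; first by rewrite take0 big_nil /slog.
have hjs : (j < size s)%N by [].
rewrite (take_nth 0 hjs) -cats1 big_cat big_seq1 /=.
set d := \rank (nth 0 s j).
apply: leq_trans (@slog_step _ d m hm1 _) _; last by rewrite ltnS; apply: IH; apply: ltnW.
case: (posnP d) => d0; [by left | right].
have hY : nth 0 s j \in drop j s.
  by rewrite -[j in nth _ s j]addn0 -nth_drop mem_nth // size_drop subn_gt0.
have hrk : forall Q, Q \in drop j s -> (d <= \rank Q)%N.
  move=> Q /(nthP 0) [k hk <-]; rewrite nth_drop.
  apply: (sorted_leq_nth (leT := le)) => //.
  - by move=> a b c; exact: leq_trans.
  - by move=> a; exact: leqnn.
  all: try exact: leq_addr.
  by rewrite inE /= -ltn_subRL -size_drop.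
have := @keyR (take j s) (drop j s) d.
rewrite cat_take_drop => /(_ hcs hsums d0 (ex_intro (fun Q => Q \in drop j s) _ hY) hrk) hk.
have : (\sum_(Q <- take j s) \rank Q + d <= n)%N.
  rewrite -[X in (_ <= X)%N]tot -[in X in (_ <= X)%N](cat_take_drop j s) big_cat leq_add2l /=.
  by rewrite (big_rem _ hY) /= leq_addr.
move: hk; case: (leqP n (m * d.-1)) => h; lia.
Qed.
End Key.

Lemma adjM (C : numClosedFieldType) n (X Y : 'M[C]_n) : adj (X *m Y) = adj Y *m adj X.
Proof. exact: (@ctM C n n n X Y). Qed.

Lemma adjK (C : numClosedFieldType) n (X : 'M[C]_n) : adj (adj X) = X.
Proof. exact: (@ctK C n n X). Qed.

Theorem proposition2 (C : numClosedFieldType) (n m : nat)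
  (hn : (2 <= n)%N) (hm1 : (1 <= m)%N) (hmn : (m <= n.-1)%N)
  (A : 'I_m -> 'M[C]_n)
  (hsa : forall i, self_adjoint (A i))
  (hindep : real_indep A)
  (hcomm : forall i k, A i *m A k = A k *m A i)
  (u : 'I_n -> 'cV[C]_n) (hu : orthonormal_basis u)
  (sigma : 'I_m -> {perm 'I_n}) (lam : 'I_m -> 'I_n -> C)
  (heig : forall i j, A i *m u (sigma i j) = lam i j *: u (sigma i j))
  (hpos : forall i j, 0 < lam i j)
  (hdec : forall i (j k : 'I_n), val k = (val j).+1 ->
            lam i k < lam i j / (n ^ 2)%:R)
  (hcyc : forall (i k : 'I_m) (j j' : 'I_n), val k = (val i).+1 ->
            val j' = ((val j + shift_s n m i) %% n)%N ->
            u (sigma k j) = u (sigma i j'))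
  (henum : exists tau : {perm 'I_n}, forall l : 'I_n,
            exists (i : 'I_m) (j : 'I_n), val j = (val l %/ m)%N /\
              u (tau l) = u (sigma i j))
  (K : seq 'M[C]_n) (hK : coloring (real_span A) K) :
  (slog n m.+1 <= size K)%N.
Proof.
have uinj : injective u.
  move=> a b hab; have := hu a b; rewrite hab hu => /(congr1 (fun M : 'M[C]_1 => M 0 0)).
  rewrite !mxE eqxx; case: (a =P b) => // _ /eqP; by rewrite oner_eq0.
have hcycs : forall (i k : 'I_m) (j j' : 'I_n), val k = (val i).+1 ->
    val j' = ((val j + shift_s n m i) %% n)%N -> sigma k j = sigma i j'.
  by move=> i k j j' h1 h2; apply: uinj; exact: hcyc.
pose U : 'M[C]_n := \matrix_(a, b) u b a 0.
have UU : adj U *m U = 1%:M.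
  apply/matrixP => a b; rewrite !mxE.
  have := congr1 (fun M : 'M[C]_1 => M 0 0) (hu a b); rewrite !mxE eqxx mulr1n => <-.
  by apply: eq_bigr => k _; rewrite !mxE.
have UU' : U *m adj U = 1%:M by apply: mulmx1C.
pose mu i b := lam i (((sigma i)^-1)%g b).
have hmu : forall i p, mu i (sigma i p) = lam i p by move=> i p; rewrite /mu permK.
have AU : forall i, A i *m U = U *m dg (mu i).
  move=> i; apply/matrixP => a b; rewrite mul_mx_diag !mxE.
  have := congr1 (fun M : 'cV[C]_n => M a 0) (heig i (((sigma i)^-1)%g b)).
  rewrite permKV !mxE => e.
  rewrite (eq_bigr (fun k => A i a k * u b k 0)); last by move=> k _; rewrite !mxE.
  by rewrite e /mu mulrC.
have DU : forall i, adj U *m A i *m U = dg (mu i).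
  by move=> i; rewrite -mulmxA AU mulmxA UU mul1mx.
pose f (P : 'M[C]_n) := adj U *m P *m U.
have [_ [hcodes hsumK]] := hK.
have hc : forall Q, Q \in map f K -> iscode C n m mu Q.
  move=> Q /mapP [P hP ->]; have [[PP PH] hE] := hcodes P hP.
  split; [|split].
  - rewrite /f !mulmxA -(mulmxA _ U (adj U)) UU' mulmx1 -(mulmxA _ P P) PP //.
  - by rewrite /f !adjM adjK PH mulmxA.
  - move=> i; have [|e [er he]] := hE (A i).
      exists (fun k => (k == lift ord0 i)%:R); split.
        by move=> k; exact: realn.
      rewrite (negbTE (neq_lift _ _)) scale0r add0r (bigD1 i) //= eqxx scale1r.
      rewrite big1 ?addr0 // => k hk.
      by rewrite (inj_eq (@lift_inj _ ord0)) (negbTE hk) scale0r.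
    exists e; split => //.
    rewrite /f -DU.
    have -> : adj U *m P *m U *m (adj U *m A i *m U) *m (adj U *m P *m U)
            = adj U *m (P *m A i *m P) *m U.
      by rewrite !mulmxA -!(mulmxA _ U (adj U)) !UU' !mulmx1.
    by rewrite he -scalemxAr -scalemxAl.
have hsum : \sum_(Q <- map f K) Q = 1%:M.
  by rewrite big_map /f -mulmx_suml -mulmx_sumr hsumK mulmx1 UU.
have := @core C n m hm1 hmn sigma lam mu hmu hpos hdec hcycs (map f K) hc hsum.
by rewrite size_map.
Qed.
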